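(* Let $L_{7,2}\oplus L_1$ be the eight-dimensional real Lie algebra with basis $X_1,\dots,X_8$ whose only nonzero brackets (for $i<j$, $[X_i,X_j]=\sum_kC_{ij}^kX_k$) are $C_{23}^1=1,C_{12}^3=1,C_{13}^2=-1,C_{14}^7=\tfrac12,C_{15}^6=\tfrac12,C_{16}^5=-\tfrac12,C_{17}^4=-\tfrac12,C_{24}^5=\tfrac12,C_{25}^4=-\tfrac12,C_{26}^7=\tfrac12,C_{27}^6=-\tfrac12,C_{34}^6=\tfrac12,C_{35}^7=-\tfrac12,C_{36}^4=-\tfrac12,C_{37}^5=\tfrac12$ (so $X_8$ is central), and let $L_{7,7}\oplus L_1$ be the eight-dimensional real Lie algebra with basis $X_1,\dots,X_8$ whose only nonzero brackets are $C_{12}^2=2,C_{13}^3=-2,C_{23}^1=1,C_{14}^4=1,C_{15}^5=-1,C_{25}^4=1,C_{27}^6=1,C_{34}^5=1,C_{16}^6=1,C_{17}^7=-1,C_{36}^7=1$ (so $X_8$ is central). Then $L_{7,2}\oplus L_1$ is a contraction of $\mathfrak{su}(3)$ and of $\mathfrak{su}(2,1)$, while $L_{7,7}\oplus L_1$ is a contraction of $\mathfrak{su}(2,1)$ and of $\mathfrak{sl}(3,\mathbb{R})$.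
   Context: All Lie algebras are over $\mathbb{R}$. Unlisted brackets $[X_i,X_j]$, $i<j$, are zero; the others follow by antisymmetry. Contraction: for a Lie algebra $(V,[\cdot,\cdot])$ and nonsingular linear maps $\Phi_t$, $t\in[1,\infty)$, if $[X,Y]_\infty=\lim_{t\to\infty}\Phi_t^{-1}[\Phi_tX,\Phi_tY]$ exists for all $X,Y$, any Lie algebra isomorphic to $(V,[\cdot,\cdot]_\infty)$ is a contraction of $(V,[\cdot,\cdot])$. $\mathfrak{su}(3)$, $\mathfrak{su}(2,1)$, $\mathfrak{sl}(3,\mathbb{R})$ are the real forms of $\mathfrak{sl}(3,\mathbb{C})$. *)

(* Defs.v *)
From HB Require Import structures.
From mathcomp Require Import all_boot all_order all_algebra.
From mathcomp Require Import all_classical all_reals all_analysis.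
From mathcomp Require Import complex.

Set Implicit Arguments.
Unset Strict Implicit.
Unset Printing Implicit Defensive.

Import Order.TTheory GRing.Theory Num.Theory.
Import numFieldNormedType.Exports.
Local Open Scope classical_set_scope.
Local Open Scope ring_scope.

Definition bracket (R : realType) (n : nat) := 'rV[R]_n -> 'rV[R]_n -> 'rV[R]_n.

(* Lie algebra given by structure constants C i j k (1-based indices),
   listed only for i < j and extended by antisymmetry:
   [X_i, X_j] = sum_k C_ij^k X_k. *)
Definition full_consts (R : realType) (c : nat -> nat -> nat -> R) (i j k : nat) : R :=
  if (i < j)%N then c i j k else if (j < i)%N then - c j i k else 0.

Definition sc_bracket (R : realType) (n : nat) (c : nat -> nat -> nat -> R) : bracket R n :=
  fun X Y => \row_(k < n) \sum_(i < n) \sum_(j < n)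
      X 0 i * Y 0 j * full_consts c i.+1 j.+1 k.+1.

Definition c_L72 (R : realType) (i j k : nat) : R :=
  match i, j, k with
  | 2, 3, 1 => 1
  | 1, 2, 3 => 1
  | 1, 3, 2 => -1
  | 1, 4, 7 => 1/2
  | 1, 5, 6 => 1/2
  | 1, 6, 5 => -(1/2)
  | 1, 7, 4 => -(1/2)
  | 2, 4, 5 => 1/2
  | 2, 5, 4 => -(1/2)
  | 2, 6, 7 => 1/2
  | 2, 7, 6 => -(1/2)
  | 3, 4, 6 => 1/2
  | 3, 5, 7 => -(1/2)
  | 3, 6, 4 => -(1/2)
  | 3, 7, 5 => 1/2
  | _, _, _ => 0
  end.

Definition c_L77 (R : realType) (i j k : nat) : R :=
  match i, j, k with
  | 1, 2, 2 => 2
  | 1, 3, 3 => -2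
  | 2, 3, 1 => 1
  | 1, 4, 4 => 1
  | 1, 5, 5 => -1
  | 2, 5, 4 => 1
  | 2, 7, 6 => 1
  | 3, 4, 5 => 1
  | 1, 6, 6 => 1
  | 1, 7, 7 => -1
  | 3, 6, 7 => 1
  | _, _, _ => 0
  end.

Definition L72_L1 (R : realType) : bracket R 8 := @sc_bracket R 8 (@c_L72 R).
Definition L77_L1 (R : realType) : bracket R 8 := @sc_bracket R 8 (@c_L77 R).

Definition lie_isomorphic (R : realType) (n : nat) (br br' : bracket R n) : Prop :=
  exists A : 'M[R]_n, A \in unitmx /\
    forall X Y, br X Y *m A = br' (X *m A) (Y *m A).

Definition contraction_of (R : realType) (n : nat) (br br' : bracket R n) : Prop :=
  exists Phi : R -> 'M[R]_n,
    (forall t : R, 1 <= t -> Phi t \in unitmx) /\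
    exists brinf : bracket R n,
      (forall X Y : 'rV[R]_n,
        (fun t : R => br (X *m Phi t) (Y *m Phi t) *m invmx (Phi t))
          @ +oo --> brinf X Y) /\
      lie_isomorphic brinf br'.

(* The bracket br on R^8 is a coordinate presentation of the real matrix Lie
   algebra g (a real subspace of 3x3 matrices over K, R embedded in K by emb,
   with the commutator bracket): psi is an R-linear bijection R^8 -> g
   intertwining br with the commutator. *)
Definition presents (R : realType) (K : nzRingType) (emb : R -> K)
    (g : 'M[K]_3 -> Prop) (br : bracket R 8) : Prop :=
  exists psi : 'rV[R]_8 -> 'M[K]_3,
    (forall (a : R) x y, psi (a *: x + y) = emb a *: psi x + psi y) /\
    injective psi /\
    (forall A, g A <-> exists x, psi x = A) /\
    (forall x y, psi (br x y) = psi x *m psi y - psi y *m psi x).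

Definition adjmx (R : rcfType) (A : 'M[R[i]]_3) : 'M[R[i]]_3 :=
  (map_mx (fun z => z^*) A)^T.

Definition su3 (R : rcfType) (A : 'M[R[i]]_3) : Prop :=
  adjmx A = - A /\ \tr A = 0.

Definition J21 (R : rcfType) : 'M[R[i]]_3 :=
  \matrix_(i < 3, j < 3) (if i == j then (if (i : nat) == 2%N then -1 else 1) else 0).

Definition su21 (R : rcfType) (A : 'M[R[i]]_3) : Prop :=
  adjmx A *m J21 R + J21 R *m A = 0 /\ \tr A = 0.

Definition sl3R (R : realType) (A : 'M[R]_3) : Prop := \tr A = 0.

Definition is_contraction_of_su3 (R : realType) (br' : bracket R 8) : Prop :=
  exists br, presents (fun a : R => a%:C)%C (@su3 R) br /\ contraction_of br br'.
Definition is_contraction_of_su21 (R : realType) (br' : bracket R 8) : Prop :=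
  exists br, presents (fun a : R => a%:C)%C (@su21 R) br /\ contraction_of br br'.
Definition is_contraction_of_sl3R (R : realType) (br' : bracket R 8) : Prop :=
  exists br, presents (fun a : R => a) (@sl3R R) br /\ contraction_of br br'.

(* Main.v *)
Require Import Defs.
From HB Require Import structures.
From mathcomp Require Import all_boot all_order all_algebra.
From mathcomp Require Import all_classical all_reals all_analysis.
From mathcomp Require Import complex ring lra.
Set Implicit Arguments.
Unset Strict Implicit.
Unset Printing Implicit Defensive.
Import Order.TTheory GRing.Theory Num.Theory.
Import numFieldNormedType.Exports.
Local Open Scope classical_set_scope.
Local Open Scope ring_scope.

Section Cx.
Variable R : realType.

Lemma ReD (x y : R[i]) : complex.Re (x + y) = complex.Re x + complex.Re y. Proof. by case: x; case: y. Qed.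
Lemma ImD (x y : R[i]) : complex.Im (x + y) = complex.Im x + complex.Im y. Proof. by case: x; case: y. Qed.
Lemma ReN (x : R[i]) : complex.Re (- x) = - complex.Re x. Proof. by case: x. Qed.
Lemma ImN (x : R[i]) : complex.Im (- x) = - complex.Im x. Proof. by case: x. Qed.
Lemma ReB (x y : R[i]) : complex.Re (x - y) = complex.Re x - complex.Re y. Proof. by case: x; case: y. Qed.
Lemma ImB (x y : R[i]) : complex.Im (x - y) = complex.Im x - complex.Im y. Proof. by case: x; case: y. Qed.
Lemma ReM (x y : R[i]) : complex.Re (x * y) = complex.Re x * complex.Re y - complex.Im x * complex.Im y. Proof. by case: x; case: y. Qed.
Lemma ImM (x y : R[i]) : complex.Im (x * y) = complex.Re x * complex.Im y + complex.Im x * complex.Re y. Proof. by case: x; case: y. Qed.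
Lemma ReC (a b : R) : complex.Re (Complex a b) = a. Proof. by []. Qed.
Lemma ImC (a b : R) : complex.Im (Complex a b) = b. Proof. by []. Qed.
Lemma Rerc (a : R) : complex.Re (a%:C)%C = a. Proof. by []. Qed.
Lemma Imrc (a : R) : complex.Im (a%:C)%C = 0. Proof. by []. Qed.
Lemma Re0 : complex.Re (0 : R[i]) = 0. Proof. by []. Qed.
Lemma Im0 : complex.Im (0 : R[i]) = 0. Proof. by []. Qed.
Lemma ReJ (x : R[i]) : complex.Re (Num.conj x) = complex.Re x. Proof. by case: x. Qed.
Lemma ImJ (x : R[i]) : complex.Im (Num.conj x) = - complex.Im x. Proof. by case: x. Qed.
Lemma cxE (x y : R[i]) : complex.Re x = complex.Re y -> complex.Im x = complex.Im y -> x = y.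
Proof. by case: x; case: y => a b c d /= -> ->. Qed.

Lemma sum3 (T : nmodType) (f : 'I_3 -> T) : \sum_(i < 3) f i =
  f (@Ordinal 3 0 isT) + f (@Ordinal 3 1 isT) + f (@Ordinal 3 2 isT).
Proof. rewrite !big_ord_recl big_ord0 addr0 !addrA.
by congr (_+_+_); congr f; apply: val_inj. Qed.
Lemma sum8 (T : nmodType) (f : 'I_8 -> T) : \sum_(i < 8) f i =
  f (@Ordinal 8 0 isT) + f (@Ordinal 8 1 isT) + f (@Ordinal 8 2 isT) + f (@Ordinal 8 3 isT)
  + f (@Ordinal 8 4 isT) + f (@Ordinal 8 5 isT) + f (@Ordinal 8 6 isT) + f (@Ordinal 8 7 isT).
Proof. rewrite !big_ord_recl big_ord0 addr0 !addrA.
by congr (_+_+_+_+_+_+_+_); congr f; apply: val_inj. Qed.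
Lemma ord3P (P : 'I_3 -> Prop) : P (@Ordinal 3 0 isT) -> P (@Ordinal 3 1 isT) -> P (@Ordinal 3 2 isT) -> forall i, P i.
Proof. by move=> H0 H1 H2 [[|[|[|n]]] Hn] //; rewrite (bool_irrelevance Hn isT). Qed.
Lemma ord8P (P : 'I_8 -> Prop) : P (@Ordinal 8 0 isT) -> P (@Ordinal 8 1 isT) -> P (@Ordinal 8 2 isT) -> P (@Ordinal 8 3 isT) -> P (@Ordinal 8 4 isT) -> P (@Ordinal 8 5 isT) -> P (@Ordinal 8 6 isT) -> P (@Ordinal 8 7 isT) -> forall i, P i.
Proof. by move=> H0 H1 H2 H3 H4 H5 H6 H7 [[|[|[|[|[|[|[|[|n]]]]]]]] Hn] //; rewrite (bool_irrelevance Hn isT). Qed.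
End Cx.

Lemma full_constsE (R : realType) (c : nat -> nat -> nat -> R) i j k :
  full_consts c i j k = if Nat.ltb i j then c i j k else if Nat.ltb j i then - c j i k else 0.
Proof.
rewrite /full_consts.
have E : forall a b, (a < b)%N = Nat.ltb a b.
  elim=> [|a IH] [|b] //=.
  by rewrite ltnS IH.
by rewrite !E.
Qed.

Definition fcN (R : realType) (c : nat -> nat -> nat -> R) (i j k : nat) : R :=
  if Nat.ltb i j then c i j k else if Nat.ltb j i then - c j i k else 0.
Lemma sc_bracketE (R : realType) (c : nat -> nat -> nat -> R) (x y : 'rV[R]_8) :
  sc_bracket c x y = \row_(k < 8) \sum_(i < 8) \sum_(j < 8) x 0 i * y 0 j * fcN c i.+1 j.+1 k.+1.
Proof.
apply/rowP => k; rewrite !mxE; apply: eq_bigr => i _; apply: eq_bigr => j _.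
by rewrite full_constsE.
Qed.

Lemma ltnNE a b : (a < b)%N = Nat.ltb a b.
Proof. elim: a b => [|a IH] [|b] //=; by rewrite ltnS IH. Qed.
Lemma leqNE a b : (a <= b)%N = Nat.leb a b.
Proof. elim: a b => [|a IH] [|b] //=; by rewrite ltnS IH. Qed.
Lemma eqnNE a b : (a == b) = Nat.eqb a b.
Proof. elim: a b => [|a IH] [|b] //=; by rewrite eqSS IH. Qed.

Lemma presents_of (R : realType) (K : nzRingType) (emb : R -> K) (g : 'M[K]_3 -> Prop)
   (br : bracket R 8) (psi : 'rV[R]_8 -> 'M[K]_3) (phi : 'M[K]_3 -> 'rV[R]_8) :
  (forall (a : R) x y, psi (a *: x + y) = emb a *: psi x + psi y) ->
  (forall x, phi (psi x) = x) ->
  (forall x, g (psi x)) ->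
  (forall A, g A -> psi (phi A) = A) ->
  (forall x y, psi (br x y) = psi x *m psi y - psi y *m psi x) ->
  presents emb g br.
Proof.
move=> Hl Hk Hg Hs Hb; exists psi; split => //; split.
  by move=> x y E; rewrite -(Hk x) -(Hk y) E.
split => // A; split; first by move=> /Hs <-; exists (phi A).
by case=> x <-.
Qed.

Section Eqs.
Variable R : realType.
Lemma su3_eqs (A : 'M[R[i]]_3) : su3 A ->
  (forall i j, complex.Re (A j i) = - complex.Re (A i j) /\ complex.Im (A j i) = complex.Im (A i j)) /\
  complex.Re (A (@Ordinal 3 0 isT) (@Ordinal 3 0 isT)) + complex.Re (A (@Ordinal 3 1 isT) (@Ordinal 3 1 isT)) + complex.Re (A (@Ordinal 3 2 isT) (@Ordinal 3 2 isT)) = 0 /\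
  complex.Im (A (@Ordinal 3 0 isT) (@Ordinal 3 0 isT)) + complex.Im (A (@Ordinal 3 1 isT) (@Ordinal 3 1 isT)) + complex.Im (A (@Ordinal 3 2 isT) (@Ordinal 3 2 isT)) = 0.
Proof.
case=> H1 H2; split.
  move=> i j; have := congr1 (fun M : 'M[R[i]]_3 => M i j) H1; rewrite /adjmx !mxE => E.
  split; [have := congr1 (@complex.Re R) E | have := congr1 (@complex.Im R) E];
    rewrite ?ReJ ?ImJ ?ReN ?ImN; lra.
move: H2; rewrite /mxtrace sum3 => H2.
by split; [have := congr1 (@complex.Re R) H2 | have := congr1 (@complex.Im R) H2];
  rewrite ?ReD ?ImD.
Qed.

Definition sg3 (i : 'I_3) : R := if (i : nat) == 2 then -1 else 1.

Lemma su21_eqs (A : 'M[R[i]]_3) : su21 A ->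
  (forall i j, complex.Re (A j i) = - (sg3 i * sg3 j) * complex.Re (A i j) /\ complex.Im (A j i) = (sg3 i * sg3 j) * complex.Im (A i j)) /\
  complex.Re (A (@Ordinal 3 0 isT) (@Ordinal 3 0 isT)) + complex.Re (A (@Ordinal 3 1 isT) (@Ordinal 3 1 isT)) + complex.Re (A (@Ordinal 3 2 isT) (@Ordinal 3 2 isT)) = 0 /\
  complex.Im (A (@Ordinal 3 0 isT) (@Ordinal 3 0 isT)) + complex.Im (A (@Ordinal 3 1 isT) (@Ordinal 3 1 isT)) + complex.Im (A (@Ordinal 3 2 isT) (@Ordinal 3 2 isT)) = 0.
Proof.
case=> H1 H2; split.
  move=> i j; have := congr1 (fun M : 'M[R[i]]_3 => M i j) H1; rewrite /adjmx !mxE !sum3 !mxE /=.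
  elim/ord3P: i; elim/ord3P: j; rewrite /sg3 /= => E;
  (split; [have := congr1 (@complex.Re R) E | have := congr1 (@complex.Im R) E]);
    rewrite ?ReD ?ImD ?ReM ?ImM ?ReJ ?ImJ ?ReN ?ImN /=; lra.
move: H2; rewrite /mxtrace sum3 => H2.
by split; [have := congr1 (@complex.Re R) H2 | have := congr1 (@complex.Im R) H2];
  rewrite ?ReD ?ImD.
Qed.
End Eqs.

Section Gen.
Variable R : realType.

Lemma inv_cvg0 : (fun t : R => t^-1) @ +oo --> 0.
Proof.
have := (proj2 (@gtr0_cvgV0 R R (pinfty_nbhs R) _ (fun t : R => t) _)).
apply; last exact: cvg_id.
by near=> t.
Unshelve. all: by end_near. Qed.

Lemma invX_cvg0 p : (fun t : R => (t^-1)^+p.+1) @ +oo --> 0.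
Proof.
elim: p => [|p IH]; first by under eq_cvg do rewrite expr1; exact: inv_cvg0.
under eq_cvg do rewrite exprS.
have := cvgM inv_cvg0 IH; rewrite mulr0; apply.
Qed.

Definition okK (m n : nat) (K K' : R) : Prop :=
  if m == n then K = K' else if (n < m)%N then K' = 0 else K = 0 /\ K' = 0.

Lemma okK_cvg m n K K' : okK m n K K' ->
  (fun t : R => K * ((t^-1)^+m / (t^-1)^+n)) @ +oo --> K'.
Proof.
rewrite /okK; case: eqP => [<- ->|mn].
  apply: cvg_trans (near_eq_cvg _) (cvg_cst K').
  near=> t; rewrite divff ?mulr1 // expf_neq0 // invr_eq0; apply: lt0r_neq0.
  by near: t; exists 0.
case: ltnP => [nm ->|].
  have -> : (m = n + (m - n).-1.+1)%N by rewrite prednK ?subn_gt0 // subnKC // ltnW.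
  rewrite -[0](mulr0 K); apply: cvgMl_tmp.
  apply: cvg_trans (near_eq_cvg _) (invX_cvg0 _).
  near=> t. rewrite exprD mulrAC divff ?mul1r // expf_neq0 // invr_eq0.
  apply: lt0r_neq0; by near: t; exists 0.
by move=> _ [-> ->]; under eq_cvg do rewrite mul0r; exact: cvg_cst.
Unshelve. all: by end_near. Qed.


Lemma cvg_sumR (n : nat) (f : 'I_n -> R -> R) (l : 'I_n -> R) :
  (forall k, f k t @[t --> +oo] --> l k) ->
  (\sum_(k < n) f k t) @[t --> +oo] --> \sum_(k < n) l k.
Proof.
move=> H; apply: (@cvg_big R 'I_n +%R 0 xpredT add_continuous) => //.
Qed.

Lemma cvg_rowR (n : nat) (f : 'I_n -> R -> R) (l : 'I_n -> R) :
  (forall k, f k t @[t --> +oo] --> l k) ->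
  (\row_(k < n) f k t) @[t --> +oo] --> \row_(k < n) l k.
Proof.
move=> H.
have E : forall g : 'I_n -> R, \row_(k < n) g k = \sum_(k < n) g k *: delta_mx 0 k.
  by move=> g; rewrite [LHS]row_sum_delta; apply: eq_bigr => k _; rewrite mxE.
under eq_cvg do rewrite E.
rewrite E.
apply: (@cvg_big _ 'I_n +%R 0 xpredT add_continuous) => //.
move=> k _; exact: cvgZr_tmp.
Qed.


Definition dv (t : R) : 'rV[R]_8 := \row_(i < 8) (if (i < 3)%N then 1 else t^-1).
Definition Phi (t : R) : 'M[R]_8 := diag_mx (dv t).
Definition mi (i : 'I_8) : nat := (3 <= i)%N.

Lemma dvE t i : dv t 0 i = (t^-1)^+(mi i).
Proof. by rewrite mxE /mi; case: ltnP => _ /=; rewrite ?expr0 ?expr1. Qed.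

Lemma dvE' (t : R) (i : 'I_8) : (if (i < 3)%N then 1 else t^-1) = (t^-1)^+(mi i).
Proof. by rewrite /mi; case: ltnP => _ /=; rewrite ?expr0 ?expr1. Qed.

Lemma Phi_unit t : t != 0 -> Phi t \in unitmx.
Proof.
move=> t0; rewrite unitmxE det_diag unitfE; apply/prodf_neq0 => i _.
by rewrite dvE expf_neq0 // invr_eq0.
Qed.

Lemma scaledE (c : nat -> nat -> nat -> R) X Y t : t != 0 ->
  sc_bracket c (X *m Phi t) (Y *m Phi t) *m invmx (Phi t) =
  \row_(k < 8) \sum_(i < 8) \sum_(j < 8) X 0 i * Y 0 j *
     (full_consts c i.+1 j.+1 k.+1 * ((t^-1)^+(mi i + mi j) / (t^-1)^+(mi k))).
Proof.
move=> t0; apply: (canLR (mulmxK (Phi_unit t0))).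
apply/rowP => k; rewrite /Phi !mul_mx_diag !mxE mulr_suml; apply: eq_bigr => i _.
rewrite mulr_suml; apply: eq_bigr => j _.
rewrite !mxE !dvE' exprD.
have : (t^-1)^+(mi k) != 0 by rewrite expf_neq0 // invr_eq0.
move: ((t^-1)^+(mi k)) => a a0. field. exact: a0.
Qed.

Lemma contraction_generic (c c' : nat -> nat -> nat -> R) :
  (forall i j k : 'I_8, okK (mi i + mi j) (mi k)
     (full_consts c i.+1 j.+1 k.+1) (full_consts c' i.+1 j.+1 k.+1)) ->
  contraction_of (@sc_bracket R 8 c) (@sc_bracket R 8 c').
Proof.
move=> H; exists Phi; split.
  move=> t t1; apply: Phi_unit; apply: lt0r_neq0; exact: lt_le_trans t1.
exists (sc_bracket c'); split; last first.
  exists 1%:M; split; first exact: unitmx1.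
  by move=> X Y; rewrite !mulmx1.
move=> X Y.
pose G := (fun t => \row_(k < 8) \sum_(i < 8) \sum_(j < 8) X 0 i * Y 0 j *
     (full_consts c i.+1 j.+1 k.+1 * ((t^-1)^+(mi i + mi j) / (t^-1)^+(mi k)))).
apply: (@cvg_trans _ (G @ +oo)).
  apply: near_eq_cvg.
  near=> t; rewrite /G scaledE //; apply: lt0r_neq0; by near: t; exists 0.
apply: cvg_rowR => k; apply: cvg_sumR => i; apply: cvg_sumR => j.
apply: cvgMl_tmp; exact: okK_cvg.
Unshelve. all: by end_near. Qed.


Definition okN (m n : nat) (K K' : R) : Prop :=
  if Nat.eqb m n then K = K' else if Nat.ltb n m then K' = 0 else K = 0 /\ K' = 0.
Definition miN (i : nat) : nat := if Nat.leb 3 i then 1 else 0.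

Lemma contraction_N (c c' : nat -> nat -> nat -> R) :
  (forall i j k : 'I_8, okN (miN i + miN j) (miN k)
     (fcN c i.+1 j.+1 k.+1) (fcN c' i.+1 j.+1 k.+1)) ->
  contraction_of (@sc_bracket R 8 c) (@sc_bracket R 8 c').
Proof.
move=> H; apply: contraction_generic => i j k.
have E : forall l : 'I_8, mi l = miN l by move=> l; rewrite /mi /miN -leqNE; case: (3 <= l)%N.
rewrite !E !full_constsE /okK eqnNE ltnNE; exact: H.
Qed.

End Gen.

Section S_su3.
Variable R : realType.
Definition C_su3 (i j k : nat) : R :=
  match i, j, k with
  | 1, 2, 3 => 1
  | 1, 3, 2 => -1
  | 1, 4, 7 => 1/2
  | 1, 5, 6 => 1/2
  | 1, 6, 5 => -(1/2)
  | 1, 7, 4 => -(1/2)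
  | 2, 3, 1 => 1
  | 2, 4, 5 => 1/2
  | 2, 5, 4 => -(1/2)
  | 2, 6, 7 => 1/2
  | 2, 7, 6 => -(1/2)
  | 3, 4, 6 => 1/2
  | 3, 5, 7 => -(1/2)
  | 3, 6, 4 => -(1/2)
  | 3, 7, 5 => 1/2
  | 4, 5, 2 => 2
  | 4, 6, 3 => 2
  | 4, 6, 8 => -1
  | 4, 7, 1 => 2
  | 4, 8, 6 => 3
  | 5, 6, 1 => 2
  | 5, 7, 3 => -2
  | 5, 7, 8 => -1
  | 5, 8, 7 => 3
  | 6, 7, 2 => 2
  | 6, 8, 4 => -3
  | 7, 8, 5 => -3
  | _, _, _ => 0
  end.
Definition pe_su3 (x : 'rV[R]_8) (i j : nat) : R[i] :=
  match i, j with
  | 0, 0 => Complex (0) (- (1/2) * x 0 (@Ordinal 8 2 isT) + x 0 (@Ordinal 8 7 isT))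
  | 0, 1 => Complex (- (1/2) * x 0 (@Ordinal 8 1 isT)) (- (1/2) * x 0 (@Ordinal 8 0 isT))
  | 0, 2 => Complex (x 0 (@Ordinal 8 5 isT)) (x 0 (@Ordinal 8 3 isT))
  | 1, 0 => Complex ((1/2) * x 0 (@Ordinal 8 1 isT)) (- (1/2) * x 0 (@Ordinal 8 0 isT))
  | 1, 1 => Complex (0) ((1/2) * x 0 (@Ordinal 8 2 isT) + x 0 (@Ordinal 8 7 isT))
  | 1, 2 => Complex (x 0 (@Ordinal 8 6 isT)) (x 0 (@Ordinal 8 4 isT))
  | 2, 0 => Complex (- x 0 (@Ordinal 8 5 isT)) (x 0 (@Ordinal 8 3 isT))
  | 2, 1 => Complex (- x 0 (@Ordinal 8 6 isT)) (x 0 (@Ordinal 8 4 isT))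
  | 2, 2 => Complex (0) (- 2 * x 0 (@Ordinal 8 7 isT))
  | _, _ => 0
  end.
Definition psi_su3 (x : 'rV[R]_8) : 'M[R[i]]_3 := \matrix_(i < 3, j < 3) pe_su3 x i j.
Definition ph_su3 (A : 'M[R[i]]_3) : 'rV[R]_8 := \row_(k < 8)
  match (k : nat) with
  | 0 => - 2 * complex.Im (A (@Ordinal 3 0 isT) (@Ordinal 3 1 isT))
  | 1 => - 2 * complex.Re (A (@Ordinal 3 0 isT) (@Ordinal 3 1 isT))
  | 2 => - complex.Im (A (@Ordinal 3 0 isT) (@Ordinal 3 0 isT)) + complex.Im (A (@Ordinal 3 1 isT) (@Ordinal 3 1 isT))
  | 3 => complex.Im (A (@Ordinal 3 0 isT) (@Ordinal 3 2 isT))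
  | 4 => complex.Im (A (@Ordinal 3 1 isT) (@Ordinal 3 2 isT))
  | 5 => complex.Re (A (@Ordinal 3 0 isT) (@Ordinal 3 2 isT))
  | 6 => complex.Re (A (@Ordinal 3 1 isT) (@Ordinal 3 2 isT))
  | 7 => (1/2) * complex.Im (A (@Ordinal 3 0 isT) (@Ordinal 3 0 isT)) + (1/2) * complex.Im (A (@Ordinal 3 1 isT) (@Ordinal 3 1 isT))
  | _ => 0
  end.
Lemma sc_su3 x y : sc_bracket C_su3 x y = \row_(k < 8) match (k : nat) with
  | 0 => (x 0 (@Ordinal 8 1 isT) * y 0 (@Ordinal 8 2 isT)) - (x 0 (@Ordinal 8 2 isT) * y 0 (@Ordinal 8 1 isT)) + 2 * (x 0 (@Ordinal 8 3 isT) * y 0 (@Ordinal 8 6 isT)) + 2 * (x 0 (@Ordinal 8 4 isT) * y 0 (@Ordinal 8 5 isT)) - 2 * (x 0 (@Ordinal 8 5 isT) * y 0 (@Ordinal 8 4 isT)) - 2 * (x 0 (@Ordinal 8 6 isT) * y 0 (@Ordinal 8 3 isT))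
  | 1 => - (x 0 (@Ordinal 8 0 isT) * y 0 (@Ordinal 8 2 isT)) + (x 0 (@Ordinal 8 2 isT) * y 0 (@Ordinal 8 0 isT)) + 2 * (x 0 (@Ordinal 8 3 isT) * y 0 (@Ordinal 8 4 isT)) - 2 * (x 0 (@Ordinal 8 4 isT) * y 0 (@Ordinal 8 3 isT)) + 2 * (x 0 (@Ordinal 8 5 isT) * y 0 (@Ordinal 8 6 isT)) - 2 * (x 0 (@Ordinal 8 6 isT) * y 0 (@Ordinal 8 5 isT))
  | 2 => (x 0 (@Ordinal 8 0 isT) * y 0 (@Ordinal 8 1 isT)) - (x 0 (@Ordinal 8 1 isT) * y 0 (@Ordinal 8 0 isT)) + 2 * (x 0 (@Ordinal 8 3 isT) * y 0 (@Ordinal 8 5 isT)) - 2 * (x 0 (@Ordinal 8 4 isT) * y 0 (@Ordinal 8 6 isT)) - 2 * (x 0 (@Ordinal 8 5 isT) * y 0 (@Ordinal 8 3 isT)) + 2 * (x 0 (@Ordinal 8 6 isT) * y 0 (@Ordinal 8 4 isT))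
  | 3 => - (1/2) * (x 0 (@Ordinal 8 0 isT) * y 0 (@Ordinal 8 6 isT)) - (1/2) * (x 0 (@Ordinal 8 1 isT) * y 0 (@Ordinal 8 4 isT)) - (1/2) * (x 0 (@Ordinal 8 2 isT) * y 0 (@Ordinal 8 5 isT)) + (1/2) * (x 0 (@Ordinal 8 4 isT) * y 0 (@Ordinal 8 1 isT)) + (1/2) * (x 0 (@Ordinal 8 5 isT) * y 0 (@Ordinal 8 2 isT)) - 3 * (x 0 (@Ordinal 8 5 isT) * y 0 (@Ordinal 8 7 isT)) + (1/2) * (x 0 (@Ordinal 8 6 isT) * y 0 (@Ordinal 8 0 isT)) + 3 * (x 0 (@Ordinal 8 7 isT) * y 0 (@Ordinal 8 5 isT))
  | 4 => - (1/2) * (x 0 (@Ordinal 8 0 isT) * y 0 (@Ordinal 8 5 isT)) + (1/2) * (x 0 (@Ordinal 8 1 isT) * y 0 (@Ordinal 8 3 isT)) + (1/2) * (x 0 (@Ordinal 8 2 isT) * y 0 (@Ordinal 8 6 isT)) - (1/2) * (x 0 (@Ordinal 8 3 isT) * y 0 (@Ordinal 8 1 isT)) + (1/2) * (x 0 (@Ordinal 8 5 isT) * y 0 (@Ordinal 8 0 isT)) - (1/2) * (x 0 (@Ordinal 8 6 isT) * y 0 (@Ordinal 8 2 isT)) - 3 * (x 0 (@Ordinal 8 6 isT) * y 0 (@Ordinal 8 7 isT)) + 3 * (x 0 (@Ordinal 8 7 isT) * y 0 (@Ordinal 8 6 isT))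
  | 5 => (1/2) * (x 0 (@Ordinal 8 0 isT) * y 0 (@Ordinal 8 4 isT)) - (1/2) * (x 0 (@Ordinal 8 1 isT) * y 0 (@Ordinal 8 6 isT)) + (1/2) * (x 0 (@Ordinal 8 2 isT) * y 0 (@Ordinal 8 3 isT)) - (1/2) * (x 0 (@Ordinal 8 3 isT) * y 0 (@Ordinal 8 2 isT)) + 3 * (x 0 (@Ordinal 8 3 isT) * y 0 (@Ordinal 8 7 isT)) - (1/2) * (x 0 (@Ordinal 8 4 isT) * y 0 (@Ordinal 8 0 isT)) + (1/2) * (x 0 (@Ordinal 8 6 isT) * y 0 (@Ordinal 8 1 isT)) - 3 * (x 0 (@Ordinal 8 7 isT) * y 0 (@Ordinal 8 3 isT))
  | 6 => (1/2) * (x 0 (@Ordinal 8 0 isT) * y 0 (@Ordinal 8 3 isT)) + (1/2) * (x 0 (@Ordinal 8 1 isT) * y 0 (@Ordinal 8 5 isT)) - (1/2) * (x 0 (@Ordinal 8 2 isT) * y 0 (@Ordinal 8 4 isT)) - (1/2) * (x 0 (@Ordinal 8 3 isT) * y 0 (@Ordinal 8 0 isT)) + (1/2) * (x 0 (@Ordinal 8 4 isT) * y 0 (@Ordinal 8 2 isT)) + 3 * (x 0 (@Ordinal 8 4 isT) * y 0 (@Ordinal 8 7 isT)) - (1/2) * (x 0 (@Ordinal 8 5 isT) * y 0 (@Ordinal 8 1 isT)) - 3 * (x 0 (@Ordinal 8 7 isT) * y 0 (@Ordinal 8 4 isT))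
  | 7 => - (x 0 (@Ordinal 8 3 isT) * y 0 (@Ordinal 8 5 isT)) - (x 0 (@Ordinal 8 4 isT) * y 0 (@Ordinal 8 6 isT)) + (x 0 (@Ordinal 8 5 isT) * y 0 (@Ordinal 8 3 isT)) + (x 0 (@Ordinal 8 6 isT) * y 0 (@Ordinal 8 4 isT))
  | _ => 0 end.
Proof. rewrite sc_bracketE; apply/rowP => k; elim/ord8P: k; rewrite !mxE !sum8 /fcN /=; by field. Qed.
Lemma lin_su3 (a : R) x y : psi_su3 (a *: x + y) = (a%:C)%C *: psi_su3 x + psi_su3 y.
Proof. apply/matrixP => i j; elim/ord3P: i; elim/ord3P: j; rewrite !mxE /=; apply: cxE => /=; rewrite ?mxE; ring. Qed.
Lemma phpsi_su3 x : ph_su3 (psi_su3 x) = x.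
Proof. apply/rowP => k; elim/ord8P: k; rewrite !mxE /= ?mxE /=; by field. Qed.
Lemma in_su3 x : su3 (psi_su3 x).
Proof.
split.
  rewrite /adjmx; apply/matrixP => i j; elim/ord3P: i; elim/ord3P: j; rewrite !mxE /=; apply: cxE => /=; by field.
rewrite /mxtrace sum3 !mxE /=; apply: cxE => /=; by field.
Qed.
Lemma sur_su3 A : su3 A -> psi_su3 (ph_su3 A) = A.
Proof.
move=> /su3_eqs [E [T1 T2]].
move: (E (@Ordinal 3 0 isT) (@Ordinal 3 0 isT)); rewrite ?/sg3 /= => -[e00 f00].
move: (E (@Ordinal 3 0 isT) (@Ordinal 3 1 isT)); rewrite ?/sg3 /= => -[e01 f01].
move: (E (@Ordinal 3 0 isT) (@Ordinal 3 2 isT)); rewrite ?/sg3 /= => -[e02 f02].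
move: (E (@Ordinal 3 1 isT) (@Ordinal 3 0 isT)); rewrite ?/sg3 /= => -[e10 f10].
move: (E (@Ordinal 3 1 isT) (@Ordinal 3 1 isT)); rewrite ?/sg3 /= => -[e11 f11].
move: (E (@Ordinal 3 1 isT) (@Ordinal 3 2 isT)); rewrite ?/sg3 /= => -[e12 f12].
move: (E (@Ordinal 3 2 isT) (@Ordinal 3 0 isT)); rewrite ?/sg3 /= => -[e20 f20].
move: (E (@Ordinal 3 2 isT) (@Ordinal 3 1 isT)); rewrite ?/sg3 /= => -[e21 f21].
move: (E (@Ordinal 3 2 isT) (@Ordinal 3 2 isT)); rewrite ?/sg3 /= => -[e22 f22].
apply/matrixP => i j; elim/ord3P: i; elim/ord3P: j; rewrite !mxE /=; apply: cxE => /=; rewrite ?mxE /=; lra.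
Qed.
Lemma br_su3 x y : psi_su3 (sc_bracket C_su3 x y) = psi_su3 x *m psi_su3 y - psi_su3 y *m psi_su3 x.
Proof.
rewrite sc_su3; apply/matrixP => i j; elim/ord3P: i; elim/ord3P: j; rewrite !mxE !sum3 !mxE /=; apply: cxE => /=; rewrite ?mxE /=.
all: by field.
Qed.
Lemma pres_su3 : presents (fun a : R => (a%:C)%C) (@su3 R) (sc_bracket C_su3).
Proof. exact: (presents_of (@lin_su3) (@phpsi_su3) (@in_su3) (@sur_su3) (@br_su3)). Qed.
Lemma ctr_su3 : contraction_of (@sc_bracket R 8 C_su3) (@L72_L1 R).
Proof.
apply: contraction_N => i j k; elim/ord8P: i; elim/ord8P: j; elim/ord8P: k;
  rewrite /okN /miN /fcN /=.
all: rewrite ?oppr0; try by [].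
Qed.
End S_su3.

Section S_su21a.
Variable R : realType.
Definition C_su21a (i j k : nat) : R :=
  match i, j, k with
  | 1, 2, 3 => 1
  | 1, 3, 2 => -1
  | 1, 4, 7 => 1/2
  | 1, 5, 6 => 1/2
  | 1, 6, 5 => -(1/2)
  | 1, 7, 4 => -(1/2)
  | 2, 3, 1 => 1
  | 2, 4, 5 => 1/2
  | 2, 5, 4 => -(1/2)
  | 2, 6, 7 => 1/2
  | 2, 7, 6 => -(1/2)
  | 3, 4, 6 => 1/2
  | 3, 5, 7 => -(1/2)
  | 3, 6, 4 => -(1/2)
  | 3, 7, 5 => 1/2
  | 4, 5, 2 => -2
  | 4, 6, 3 => -2
  | 4, 6, 8 => 1
  | 4, 7, 1 => -2
  | 4, 8, 6 => 3
  | 5, 6, 1 => -2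
  | 5, 7, 3 => 2
  | 5, 7, 8 => 1
  | 5, 8, 7 => 3
  | 6, 7, 2 => -2
  | 6, 8, 4 => -3
  | 7, 8, 5 => -3
  | _, _, _ => 0
  end.
Definition pe_su21a (x : 'rV[R]_8) (i j : nat) : R[i] :=
  match i, j with
  | 0, 0 => Complex (0) (- (1/2) * x 0 (@Ordinal 8 2 isT) + x 0 (@Ordinal 8 7 isT))
  | 0, 1 => Complex (- (1/2) * x 0 (@Ordinal 8 1 isT)) (- (1/2) * x 0 (@Ordinal 8 0 isT))
  | 0, 2 => Complex (x 0 (@Ordinal 8 5 isT)) (x 0 (@Ordinal 8 3 isT))
  | 1, 0 => Complex ((1/2) * x 0 (@Ordinal 8 1 isT)) (- (1/2) * x 0 (@Ordinal 8 0 isT))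
  | 1, 1 => Complex (0) ((1/2) * x 0 (@Ordinal 8 2 isT) + x 0 (@Ordinal 8 7 isT))
  | 1, 2 => Complex (x 0 (@Ordinal 8 6 isT)) (x 0 (@Ordinal 8 4 isT))
  | 2, 0 => Complex (x 0 (@Ordinal 8 5 isT)) (- x 0 (@Ordinal 8 3 isT))
  | 2, 1 => Complex (x 0 (@Ordinal 8 6 isT)) (- x 0 (@Ordinal 8 4 isT))
  | 2, 2 => Complex (0) (- 2 * x 0 (@Ordinal 8 7 isT))
  | _, _ => 0
  end.
Definition psi_su21a (x : 'rV[R]_8) : 'M[R[i]]_3 := \matrix_(i < 3, j < 3) pe_su21a x i j.
Definition ph_su21a (A : 'M[R[i]]_3) : 'rV[R]_8 := \row_(k < 8)
  match (k : nat) with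
  | 0 => - 2 * complex.Im (A (@Ordinal 3 0 isT) (@Ordinal 3 1 isT))
  | 1 => - 2 * complex.Re (A (@Ordinal 3 0 isT) (@Ordinal 3 1 isT))
  | 2 => - complex.Im (A (@Ordinal 3 0 isT) (@Ordinal 3 0 isT)) + complex.Im (A (@Ordinal 3 1 isT) (@Ordinal 3 1 isT))
  | 3 => complex.Im (A (@Ordinal 3 0 isT) (@Ordinal 3 2 isT))
  | 4 => complex.Im (A (@Ordinal 3 1 isT) (@Ordinal 3 2 isT))
  | 5 => complex.Re (A (@Ordinal 3 0 isT) (@Ordinal 3 2 isT))
  | 6 => complex.Re (A (@Ordinal 3 1 isT) (@Ordinal 3 2 isT))
  | 7 => (1/2) * complex.Im (A (@Ordinal 3 0 isT) (@Ordinal 3 0 isT)) + (1/2) * complex.Im (A (@Ordinal 3 1 isT) (@Ordinal 3 1 isT))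
  | _ => 0
  end.
Lemma sc_su21a x y : sc_bracket C_su21a x y = \row_(k < 8) match (k : nat) with
  | 0 => (x 0 (@Ordinal 8 1 isT) * y 0 (@Ordinal 8 2 isT)) - (x 0 (@Ordinal 8 2 isT) * y 0 (@Ordinal 8 1 isT)) - 2 * (x 0 (@Ordinal 8 3 isT) * y 0 (@Ordinal 8 6 isT)) - 2 * (x 0 (@Ordinal 8 4 isT) * y 0 (@Ordinal 8 5 isT)) + 2 * (x 0 (@Ordinal 8 5 isT) * y 0 (@Ordinal 8 4 isT)) + 2 * (x 0 (@Ordinal 8 6 isT) * y 0 (@Ordinal 8 3 isT))
  | 1 => - (x 0 (@Ordinal 8 0 isT) * y 0 (@Ordinal 8 2 isT)) + (x 0 (@Ordinal 8 2 isT) * y 0 (@Ordinal 8 0 isT)) - 2 * (x 0 (@Ordinal 8 3 isT) * y 0 (@Ordinal 8 4 isT)) + 2 * (x 0 (@Ordinal 8 4 isT) * y 0 (@Ordinal 8 3 isT)) - 2 * (x 0 (@Ordinal 8 5 isT) * y 0 (@Ordinal 8 6 isT)) + 2 * (x 0 (@Ordinal 8 6 isT) * y 0 (@Ordinal 8 5 isT))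
  | 2 => (x 0 (@Ordinal 8 0 isT) * y 0 (@Ordinal 8 1 isT)) - (x 0 (@Ordinal 8 1 isT) * y 0 (@Ordinal 8 0 isT)) - 2 * (x 0 (@Ordinal 8 3 isT) * y 0 (@Ordinal 8 5 isT)) + 2 * (x 0 (@Ordinal 8 4 isT) * y 0 (@Ordinal 8 6 isT)) + 2 * (x 0 (@Ordinal 8 5 isT) * y 0 (@Ordinal 8 3 isT)) - 2 * (x 0 (@Ordinal 8 6 isT) * y 0 (@Ordinal 8 4 isT))
  | 3 => - (1/2) * (x 0 (@Ordinal 8 0 isT) * y 0 (@Ordinal 8 6 isT)) - (1/2) * (x 0 (@Ordinal 8 1 isT) * y 0 (@Ordinal 8 4 isT)) - (1/2) * (x 0 (@Ordinal 8 2 isT) * y 0 (@Ordinal 8 5 isT)) + (1/2) * (x 0 (@Ordinal 8 4 isT) * y 0 (@Ordinal 8 1 isT)) + (1/2) * (x 0 (@Ordinal 8 5 isT) * y 0 (@Ordinal 8 2 isT)) - 3 * (x 0 (@Ordinal 8 5 isT) * y 0 (@Ordinal 8 7 isT)) + (1/2) * (x 0 (@Ordinal 8 6 isT) * y 0 (@Ordinal 8 0 isT)) + 3 * (x 0 (@Ordinal 8 7 isT) * y 0 (@Ordinal 8 5 isT))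
  | 4 => - (1/2) * (x 0 (@Ordinal 8 0 isT) * y 0 (@Ordinal 8 5 isT)) + (1/2) * (x 0 (@Ordinal 8 1 isT) * y 0 (@Ordinal 8 3 isT)) + (1/2) * (x 0 (@Ordinal 8 2 isT) * y 0 (@Ordinal 8 6 isT)) - (1/2) * (x 0 (@Ordinal 8 3 isT) * y 0 (@Ordinal 8 1 isT)) + (1/2) * (x 0 (@Ordinal 8 5 isT) * y 0 (@Ordinal 8 0 isT)) - (1/2) * (x 0 (@Ordinal 8 6 isT) * y 0 (@Ordinal 8 2 isT)) - 3 * (x 0 (@Ordinal 8 6 isT) * y 0 (@Ordinal 8 7 isT)) + 3 * (x 0 (@Ordinal 8 7 isT) * y 0 (@Ordinal 8 6 isT))
  | 5 => (1/2) * (x 0 (@Ordinal 8 0 isT) * y 0 (@Ordinal 8 4 isT)) - (1/2) * (x 0 (@Ordinal 8 1 isT) * y 0 (@Ordinal 8 6 isT)) + (1/2) * (x 0 (@Ordinal 8 2 isT) * y 0 (@Ordinal 8 3 isT)) - (1/2) * (x 0 (@Ordinal 8 3 isT) * y 0 (@Ordinal 8 2 isT)) + 3 * (x 0 (@Ordinal 8 3 isT) * y 0 (@Ordinal 8 7 isT)) - (1/2) * (x 0 (@Ordinal 8 4 isT) * y 0 (@Ordinal 8 0 isT)) + (1/2) * (x 0 (@Ordinal 8 6 isT) * y 0 (@Ordinal 8 1 isT)) - 3 * (x 0 (@Ordinal 8 7 isT) * y 0 (@Ordinal 8 3 isT))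
  | 6 => (1/2) * (x 0 (@Ordinal 8 0 isT) * y 0 (@Ordinal 8 3 isT)) + (1/2) * (x 0 (@Ordinal 8 1 isT) * y 0 (@Ordinal 8 5 isT)) - (1/2) * (x 0 (@Ordinal 8 2 isT) * y 0 (@Ordinal 8 4 isT)) - (1/2) * (x 0 (@Ordinal 8 3 isT) * y 0 (@Ordinal 8 0 isT)) + (1/2) * (x 0 (@Ordinal 8 4 isT) * y 0 (@Ordinal 8 2 isT)) + 3 * (x 0 (@Ordinal 8 4 isT) * y 0 (@Ordinal 8 7 isT)) - (1/2) * (x 0 (@Ordinal 8 5 isT) * y 0 (@Ordinal 8 1 isT)) - 3 * (x 0 (@Ordinal 8 7 isT) * y 0 (@Ordinal 8 4 isT))
  | 7 => (x 0 (@Ordinal 8 3 isT) * y 0 (@Ordinal 8 5 isT)) + (x 0 (@Ordinal 8 4 isT) * y 0 (@Ordinal 8 6 isT)) - (x 0 (@Ordinal 8 5 isT) * y 0 (@Ordinal 8 3 isT)) - (x 0 (@Ordinal 8 6 isT) * y 0 (@Ordinal 8 4 isT))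
  | _ => 0 end.
Proof. rewrite sc_bracketE; apply/rowP => k; elim/ord8P: k; rewrite !mxE !sum8 /fcN /=; by field. Qed.
Lemma lin_su21a (a : R) x y : psi_su21a (a *: x + y) = (a%:C)%C *: psi_su21a x + psi_su21a y.
Proof. apply/matrixP => i j; elim/ord3P: i; elim/ord3P: j; rewrite !mxE /=; apply: cxE => /=; rewrite ?mxE; ring. Qed.
Lemma phpsi_su21a x : ph_su21a (psi_su21a x) = x.
Proof. apply/rowP => k; elim/ord8P: k; rewrite !mxE /= ?mxE /=; by field. Qed.
Lemma in_su21a x : su21 (psi_su21a x).
Proof.
split.
  rewrite /adjmx; apply/matrixP => i j; elim/ord3P: i; elim/ord3P: j; rewrite !mxE !sum3 !mxE /=; apply: cxE => /=; by field.
rewrite /mxtrace sum3 !mxE /=; apply: cxE => /=; by field.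
Qed.
Lemma sur_su21a A : su21 A -> psi_su21a (ph_su21a A) = A.
Proof.
move=> /su21_eqs [E [T1 T2]].
move: (E (@Ordinal 3 0 isT) (@Ordinal 3 0 isT)); rewrite ?/sg3 /= => -[e00 f00].
move: (E (@Ordinal 3 0 isT) (@Ordinal 3 1 isT)); rewrite ?/sg3 /= => -[e01 f01].
move: (E (@Ordinal 3 0 isT) (@Ordinal 3 2 isT)); rewrite ?/sg3 /= => -[e02 f02].
move: (E (@Ordinal 3 1 isT) (@Ordinal 3 0 isT)); rewrite ?/sg3 /= => -[e10 f10].
move: (E (@Ordinal 3 1 isT) (@Ordinal 3 1 isT)); rewrite ?/sg3 /= => -[e11 f11].
move: (E (@Ordinal 3 1 isT) (@Ordinal 3 2 isT)); rewrite ?/sg3 /= => -[e12 f12].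
move: (E (@Ordinal 3 2 isT) (@Ordinal 3 0 isT)); rewrite ?/sg3 /= => -[e20 f20].
move: (E (@Ordinal 3 2 isT) (@Ordinal 3 1 isT)); rewrite ?/sg3 /= => -[e21 f21].
move: (E (@Ordinal 3 2 isT) (@Ordinal 3 2 isT)); rewrite ?/sg3 /= => -[e22 f22].
apply/matrixP => i j; elim/ord3P: i; elim/ord3P: j; rewrite !mxE /=; apply: cxE => /=; rewrite ?mxE /=; lra.
Qed.
Lemma br_su21a x y : psi_su21a (sc_bracket C_su21a x y) = psi_su21a x *m psi_su21a y - psi_su21a y *m psi_su21a x.
Proof.
rewrite sc_su21a; apply/matrixP => i j; elim/ord3P: i; elim/ord3P: j; rewrite !mxE !sum3 !mxE /=; apply: cxE => /=; rewrite ?mxE /=.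
all: by field.
Qed.
Lemma pres_su21a : presents (fun a : R => (a%:C)%C) (@su21 R) (sc_bracket C_su21a).
Proof. exact: (presents_of (@lin_su21a) (@phpsi_su21a) (@in_su21a) (@sur_su21a) (@br_su21a)). Qed.
Lemma ctr_su21a : contraction_of (@sc_bracket R 8 C_su21a) (@L72_L1 R).
Proof.
apply: contraction_N => i j k; elim/ord8P: i; elim/ord8P: j; elim/ord8P: k;
  rewrite /okN /miN /fcN /=.
all: rewrite ?oppr0; try by [].
Qed.
End S_su21a.

Section S_sl3.
Variable R : realType.
Definition C_sl3 (i j k : nat) : R :=
  match i, j, k with
  | 1, 2, 2 => 2
  | 1, 3, 3 => -2
  | 1, 4, 4 => 1
  | 1, 5, 5 => -1
  | 1, 6, 6 => 1
  | 1, 7, 7 => -1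
  | 2, 3, 1 => 1
  | 2, 5, 4 => 1
  | 2, 7, 6 => 1
  | 3, 4, 5 => 1
  | 3, 6, 7 => 1
  | 4, 6, 2 => -1
  | 4, 7, 1 => 1/2
  | 4, 7, 8 => 1/2
  | 4, 8, 4 => -3
  | 5, 6, 1 => 1/2
  | 5, 6, 8 => -(1/2)
  | 5, 7, 3 => 1
  | 5, 8, 5 => -3
  | 6, 8, 6 => 3
  | 7, 8, 7 => 3
  | _, _, _ => 0
  end.
Definition pe_sl3 (x : 'rV[R]_8) (i j : nat) : R :=
  match i, j with
  | 0, 0 => x 0 (@Ordinal 8 0 isT) + x 0 (@Ordinal 8 7 isT)
  | 0, 1 => x 0 (@Ordinal 8 1 isT)
  | 0, 2 => x 0 (@Ordinal 8 3 isT)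
  | 1, 0 => x 0 (@Ordinal 8 2 isT)
  | 1, 1 => - x 0 (@Ordinal 8 0 isT) + x 0 (@Ordinal 8 7 isT)
  | 1, 2 => x 0 (@Ordinal 8 4 isT)
  | 2, 0 => x 0 (@Ordinal 8 6 isT)
  | 2, 1 => - x 0 (@Ordinal 8 5 isT)
  | 2, 2 => - 2 * x 0 (@Ordinal 8 7 isT)
  | _, _ => 0
  end.
Definition psi_sl3 (x : 'rV[R]_8) : 'M[R]_3 := \matrix_(i < 3, j < 3) pe_sl3 x i j.
Definition ph_sl3 (A : 'M[R]_3) : 'rV[R]_8 := \row_(k < 8)
  match (k : nat) with
  | 0 => (1/2) * A (@Ordinal 3 0 isT) (@Ordinal 3 0 isT) - (1/2) * A (@Ordinal 3 1 isT) (@Ordinal 3 1 isT)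
  | 1 => A (@Ordinal 3 0 isT) (@Ordinal 3 1 isT)
  | 2 => A (@Ordinal 3 1 isT) (@Ordinal 3 0 isT)
  | 3 => A (@Ordinal 3 0 isT) (@Ordinal 3 2 isT)
  | 4 => A (@Ordinal 3 1 isT) (@Ordinal 3 2 isT)
  | 5 => - A (@Ordinal 3 2 isT) (@Ordinal 3 1 isT)
  | 6 => A (@Ordinal 3 2 isT) (@Ordinal 3 0 isT)
  | 7 => (1/2) * A (@Ordinal 3 0 isT) (@Ordinal 3 0 isT) + (1/2) * A (@Ordinal 3 1 isT) (@Ordinal 3 1 isT)
  | _ => 0
  end.
Lemma sc_sl3 x y : sc_bracket C_sl3 x y = \row_(k < 8) match (k : nat) with
  | 0 => (x 0 (@Ordinal 8 1 isT) * y 0 (@Ordinal 8 2 isT)) - (x 0 (@Ordinal 8 2 isT) * y 0 (@Ordinal 8 1 isT)) + (1/2) * (x 0 (@Ordinal 8 3 isT) * y 0 (@Ordinal 8 6 isT)) + (1/2) * (x 0 (@Ordinal 8 4 isT) * y 0 (@Ordinal 8 5 isT)) - (1/2) * (x 0 (@Ordinal 8 5 isT) * y 0 (@Ordinal 8 4 isT)) - (1/2) * (x 0 (@Ordinal 8 6 isT) * y 0 (@Ordinal 8 3 isT))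
  | 1 => 2 * (x 0 (@Ordinal 8 0 isT) * y 0 (@Ordinal 8 1 isT)) - 2 * (x 0 (@Ordinal 8 1 isT) * y 0 (@Ordinal 8 0 isT)) - (x 0 (@Ordinal 8 3 isT) * y 0 (@Ordinal 8 5 isT)) + (x 0 (@Ordinal 8 5 isT) * y 0 (@Ordinal 8 3 isT))
  | 2 => - 2 * (x 0 (@Ordinal 8 0 isT) * y 0 (@Ordinal 8 2 isT)) + 2 * (x 0 (@Ordinal 8 2 isT) * y 0 (@Ordinal 8 0 isT)) + (x 0 (@Ordinal 8 4 isT) * y 0 (@Ordinal 8 6 isT)) - (x 0 (@Ordinal 8 6 isT) * y 0 (@Ordinal 8 4 isT))
  | 3 => (x 0 (@Ordinal 8 0 isT) * y 0 (@Ordinal 8 3 isT)) + (x 0 (@Ordinal 8 1 isT) * y 0 (@Ordinal 8 4 isT)) - (x 0 (@Ordinal 8 3 isT) * y 0 (@Ordinal 8 0 isT)) - 3 * (x 0 (@Ordinal 8 3 isT) * y 0 (@Ordinal 8 7 isT)) - (x 0 (@Ordinal 8 4 isT) * y 0 (@Ordinal 8 1 isT)) + 3 * (x 0 (@Ordinal 8 7 isT) * y 0 (@Ordinal 8 3 isT))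
  | 4 => - (x 0 (@Ordinal 8 0 isT) * y 0 (@Ordinal 8 4 isT)) + (x 0 (@Ordinal 8 2 isT) * y 0 (@Ordinal 8 3 isT)) - (x 0 (@Ordinal 8 3 isT) * y 0 (@Ordinal 8 2 isT)) + (x 0 (@Ordinal 8 4 isT) * y 0 (@Ordinal 8 0 isT)) - 3 * (x 0 (@Ordinal 8 4 isT) * y 0 (@Ordinal 8 7 isT)) + 3 * (x 0 (@Ordinal 8 7 isT) * y 0 (@Ordinal 8 4 isT))
  | 5 => (x 0 (@Ordinal 8 0 isT) * y 0 (@Ordinal 8 5 isT)) + (x 0 (@Ordinal 8 1 isT) * y 0 (@Ordinal 8 6 isT)) - (x 0 (@Ordinal 8 5 isT) * y 0 (@Ordinal 8 0 isT)) + 3 * (x 0 (@Ordinal 8 5 isT) * y 0 (@Ordinal 8 7 isT)) - (x 0 (@Ordinal 8 6 isT) * y 0 (@Ordinal 8 1 isT)) - 3 * (x 0 (@Ordinal 8 7 isT) * y 0 (@Ordinal 8 5 isT))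
  | 6 => - (x 0 (@Ordinal 8 0 isT) * y 0 (@Ordinal 8 6 isT)) + (x 0 (@Ordinal 8 2 isT) * y 0 (@Ordinal 8 5 isT)) - (x 0 (@Ordinal 8 5 isT) * y 0 (@Ordinal 8 2 isT)) + (x 0 (@Ordinal 8 6 isT) * y 0 (@Ordinal 8 0 isT)) + 3 * (x 0 (@Ordinal 8 6 isT) * y 0 (@Ordinal 8 7 isT)) - 3 * (x 0 (@Ordinal 8 7 isT) * y 0 (@Ordinal 8 6 isT))
  | 7 => (1/2) * (x 0 (@Ordinal 8 3 isT) * y 0 (@Ordinal 8 6 isT)) - (1/2) * (x 0 (@Ordinal 8 4 isT) * y 0 (@Ordinal 8 5 isT)) + (1/2) * (x 0 (@Ordinal 8 5 isT) * y 0 (@Ordinal 8 4 isT)) - (1/2) * (x 0 (@Ordinal 8 6 isT) * y 0 (@Ordinal 8 3 isT))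
  | _ => 0 end.
Proof. rewrite sc_bracketE; apply/rowP => k; elim/ord8P: k; rewrite !mxE !sum8 /fcN /=; by field. Qed.
Lemma lin_sl3 (a : R) x y : psi_sl3 (a *: x + y) = a *: psi_sl3 x + psi_sl3 y.
Proof. apply/matrixP => i j; elim/ord3P: i; elim/ord3P: j; rewrite !mxE /= ?mxE; ring. Qed.
Lemma phpsi_sl3 x : ph_sl3 (psi_sl3 x) = x.
Proof. apply/rowP => k; elim/ord8P: k; rewrite !mxE /= ?mxE /=; by field. Qed.
Lemma in_sl3 x : sl3R (psi_sl3 x).
Proof. rewrite /sl3R /mxtrace sum3 !mxE /=; ring. Qed.
Lemma sur_sl3 A : sl3R A -> psi_sl3 (ph_sl3 A) = A.
Proof.
rewrite /sl3R /mxtrace sum3 => T.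
apply/matrixP => i j; elim/ord3P: i; elim/ord3P: j; rewrite !mxE /= ?mxE /=; lra.
Qed.
Lemma br_sl3 x y : psi_sl3 (sc_bracket C_sl3 x y) = psi_sl3 x *m psi_sl3 y - psi_sl3 y *m psi_sl3 x.
Proof.
rewrite sc_sl3; apply/matrixP => i j; elim/ord3P: i; elim/ord3P: j; rewrite !mxE !sum3 !mxE /= ?mxE /=.
all: by field.
Qed.
Lemma pres_sl3 : presents (fun a : R => a) (@sl3R R) (sc_bracket C_sl3).
Proof. exact: (presents_of (@lin_sl3) (@phpsi_sl3) (@in_sl3) (@sur_sl3) (@br_sl3)). Qed.
Lemma ctr_sl3 : contraction_of (@sc_bracket R 8 C_sl3) (@L77_L1 R).
Proof.
apply: contraction_N => i j k; elim/ord8P: i; elim/ord8P: j; elim/ord8P: k;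
  rewrite /okN /miN /fcN /=.
all: rewrite ?oppr0; try by [].
Qed.
End S_sl3.

Section S_su21b.
Variable R : realType.
Definition C_su21b (i j k : nat) : R :=
  match i, j, k with
  | 1, 2, 2 => 2
  | 1, 3, 3 => -2
  | 1, 4, 4 => 1
  | 1, 5, 5 => -1
  | 1, 6, 6 => 1
  | 1, 7, 7 => -1
  | 2, 3, 1 => 1
  | 2, 5, 4 => 1
  | 2, 7, 6 => 1
  | 3, 4, 5 => 1
  | 3, 6, 7 => 1
  | 4, 5, 8 => -2
  | 4, 6, 2 => 4
  | 4, 7, 1 => -2
  | 4, 8, 6 => -3
  | 5, 6, 1 => -2
  | 5, 7, 3 => -4
  | 5, 8, 7 => -3
  | 6, 7, 8 => -2
  | 6, 8, 4 => 3
  | 7, 8, 5 => 3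
  | _, _, _ => 0
  end.
Definition pe_su21b (x : 'rV[R]_8) (i j : nat) : R[i] :=
  match i, j with
  | 0, 0 => Complex (0) ((1/2) * x 0 (@Ordinal 8 1 isT) - (1/2) * x 0 (@Ordinal 8 2 isT) + x 0 (@Ordinal 8 7 isT))
  | 0, 1 => Complex (- x 0 (@Ordinal 8 4 isT) + x 0 (@Ordinal 8 5 isT)) (- x 0 (@Ordinal 8 3 isT) - x 0 (@Ordinal 8 6 isT))
  | 0, 2 => Complex (x 0 (@Ordinal 8 0 isT)) (- (1/2) * x 0 (@Ordinal 8 1 isT) - (1/2) * x 0 (@Ordinal 8 2 isT))
  | 1, 0 => Complex (x 0 (@Ordinal 8 4 isT) - x 0 (@Ordinal 8 5 isT)) (- x 0 (@Ordinal 8 3 isT) - x 0 (@Ordinal 8 6 isT))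
  | 1, 1 => Complex (0) (- 2 * x 0 (@Ordinal 8 7 isT))
  | 1, 2 => Complex (x 0 (@Ordinal 8 4 isT) + x 0 (@Ordinal 8 5 isT)) (x 0 (@Ordinal 8 3 isT) - x 0 (@Ordinal 8 6 isT))
  | 2, 0 => Complex (x 0 (@Ordinal 8 0 isT)) ((1/2) * x 0 (@Ordinal 8 1 isT) + (1/2) * x 0 (@Ordinal 8 2 isT))
  | 2, 1 => Complex (x 0 (@Ordinal 8 4 isT) + x 0 (@Ordinal 8 5 isT)) (- x 0 (@Ordinal 8 3 isT) + x 0 (@Ordinal 8 6 isT))
  | 2, 2 => Complex (0) (- (1/2) * x 0 (@Ordinal 8 1 isT) + (1/2) * x 0 (@Ordinal 8 2 isT) + x 0 (@Ordinal 8 7 isT))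
  | _, _ => 0
  end.
Definition psi_su21b (x : 'rV[R]_8) : 'M[R[i]]_3 := \matrix_(i < 3, j < 3) pe_su21b x i j.
Definition ph_su21b (A : 'M[R[i]]_3) : 'rV[R]_8 := \row_(k < 8)
  match (k : nat) with
  | 0 => complex.Re (A (@Ordinal 3 0 isT) (@Ordinal 3 2 isT))
  | 1 => complex.Im (A (@Ordinal 3 0 isT) (@Ordinal 3 0 isT)) - complex.Im (A (@Ordinal 3 0 isT) (@Ordinal 3 2 isT)) + (1/2) * complex.Im (A (@Ordinal 3 1 isT) (@Ordinal 3 1 isT))
  | 2 => - complex.Im (A (@Ordinal 3 0 isT) (@Ordinal 3 0 isT)) - complex.Im (A (@Ordinal 3 0 isT) (@Ordinal 3 2 isT)) - (1/2) * complex.Im (A (@Ordinal 3 1 isT) (@Ordinal 3 1 isT))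
  | 3 => - (1/2) * complex.Im (A (@Ordinal 3 0 isT) (@Ordinal 3 1 isT)) + (1/2) * complex.Im (A (@Ordinal 3 1 isT) (@Ordinal 3 2 isT))
  | 4 => - (1/2) * complex.Re (A (@Ordinal 3 0 isT) (@Ordinal 3 1 isT)) + (1/2) * complex.Re (A (@Ordinal 3 1 isT) (@Ordinal 3 2 isT))
  | 5 => (1/2) * complex.Re (A (@Ordinal 3 0 isT) (@Ordinal 3 1 isT)) + (1/2) * complex.Re (A (@Ordinal 3 1 isT) (@Ordinal 3 2 isT))
  | 6 => - (1/2) * complex.Im (A (@Ordinal 3 0 isT) (@Ordinal 3 1 isT)) - (1/2) * complex.Im (A (@Ordinal 3 1 isT) (@Ordinal 3 2 isT))
  | 7 => - (1/2) * complex.Im (A (@Ordinal 3 1 isT) (@Ordinal 3 1 isT))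
  | _ => 0
  end.
Lemma sc_su21b x y : sc_bracket C_su21b x y = \row_(k < 8) match (k : nat) with
  | 0 => (x 0 (@Ordinal 8 1 isT) * y 0 (@Ordinal 8 2 isT)) - (x 0 (@Ordinal 8 2 isT) * y 0 (@Ordinal 8 1 isT)) - 2 * (x 0 (@Ordinal 8 3 isT) * y 0 (@Ordinal 8 6 isT)) - 2 * (x 0 (@Ordinal 8 4 isT) * y 0 (@Ordinal 8 5 isT)) + 2 * (x 0 (@Ordinal 8 5 isT) * y 0 (@Ordinal 8 4 isT)) + 2 * (x 0 (@Ordinal 8 6 isT) * y 0 (@Ordinal 8 3 isT))
  | 1 => 2 * (x 0 (@Ordinal 8 0 isT) * y 0 (@Ordinal 8 1 isT)) - 2 * (x 0 (@Ordinal 8 1 isT) * y 0 (@Ordinal 8 0 isT)) + 4 * (x 0 (@Ordinal 8 3 isT) * y 0 (@Ordinal 8 5 isT)) - 4 * (x 0 (@Ordinal 8 5 isT) * y 0 (@Ordinal 8 3 isT))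
  | 2 => - 2 * (x 0 (@Ordinal 8 0 isT) * y 0 (@Ordinal 8 2 isT)) + 2 * (x 0 (@Ordinal 8 2 isT) * y 0 (@Ordinal 8 0 isT)) - 4 * (x 0 (@Ordinal 8 4 isT) * y 0 (@Ordinal 8 6 isT)) + 4 * (x 0 (@Ordinal 8 6 isT) * y 0 (@Ordinal 8 4 isT))
  | 3 => (x 0 (@Ordinal 8 0 isT) * y 0 (@Ordinal 8 3 isT)) + (x 0 (@Ordinal 8 1 isT) * y 0 (@Ordinal 8 4 isT)) - (x 0 (@Ordinal 8 3 isT) * y 0 (@Ordinal 8 0 isT)) - (x 0 (@Ordinal 8 4 isT) * y 0 (@Ordinal 8 1 isT)) + 3 * (x 0 (@Ordinal 8 5 isT) * y 0 (@Ordinal 8 7 isT)) - 3 * (x 0 (@Ordinal 8 7 isT) * y 0 (@Ordinal 8 5 isT))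
  | 4 => - (x 0 (@Ordinal 8 0 isT) * y 0 (@Ordinal 8 4 isT)) + (x 0 (@Ordinal 8 2 isT) * y 0 (@Ordinal 8 3 isT)) - (x 0 (@Ordinal 8 3 isT) * y 0 (@Ordinal 8 2 isT)) + (x 0 (@Ordinal 8 4 isT) * y 0 (@Ordinal 8 0 isT)) + 3 * (x 0 (@Ordinal 8 6 isT) * y 0 (@Ordinal 8 7 isT)) - 3 * (x 0 (@Ordinal 8 7 isT) * y 0 (@Ordinal 8 6 isT))
  | 5 => (x 0 (@Ordinal 8 0 isT) * y 0 (@Ordinal 8 5 isT)) + (x 0 (@Ordinal 8 1 isT) * y 0 (@Ordinal 8 6 isT)) - 3 * (x 0 (@Ordinal 8 3 isT) * y 0 (@Ordinal 8 7 isT)) - (x 0 (@Ordinal 8 5 isT) * y 0 (@Ordinal 8 0 isT)) - (x 0 (@Ordinal 8 6 isT) * y 0 (@Ordinal 8 1 isT)) + 3 * (x 0 (@Ordinal 8 7 isT) * y 0 (@Ordinal 8 3 isT))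
  | 6 => - (x 0 (@Ordinal 8 0 isT) * y 0 (@Ordinal 8 6 isT)) + (x 0 (@Ordinal 8 2 isT) * y 0 (@Ordinal 8 5 isT)) - 3 * (x 0 (@Ordinal 8 4 isT) * y 0 (@Ordinal 8 7 isT)) - (x 0 (@Ordinal 8 5 isT) * y 0 (@Ordinal 8 2 isT)) + (x 0 (@Ordinal 8 6 isT) * y 0 (@Ordinal 8 0 isT)) + 3 * (x 0 (@Ordinal 8 7 isT) * y 0 (@Ordinal 8 4 isT))
  | 7 => - 2 * (x 0 (@Ordinal 8 3 isT) * y 0 (@Ordinal 8 4 isT)) + 2 * (x 0 (@Ordinal 8 4 isT) * y 0 (@Ordinal 8 3 isT)) - 2 * (x 0 (@Ordinal 8 5 isT) * y 0 (@Ordinal 8 6 isT)) + 2 * (x 0 (@Ordinal 8 6 isT) * y 0 (@Ordinal 8 5 isT))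
  | _ => 0 end.
Proof. rewrite sc_bracketE; apply/rowP => k; elim/ord8P: k; rewrite !mxE !sum8 /fcN /=; by field. Qed.
Lemma lin_su21b (a : R) x y : psi_su21b (a *: x + y) = (a%:C)%C *: psi_su21b x + psi_su21b y.
Proof. apply/matrixP => i j; elim/ord3P: i; elim/ord3P: j; rewrite !mxE /=; apply: cxE => /=; rewrite ?mxE; ring. Qed.
Lemma phpsi_su21b x : ph_su21b (psi_su21b x) = x.
Proof. apply/rowP => k; elim/ord8P: k; rewrite !mxE /= ?mxE /=; by field. Qed.
Lemma in_su21b x : su21 (psi_su21b x).
Proof.
split.
  rewrite /adjmx; apply/matrixP => i j; elim/ord3P: i; elim/ord3P: j; rewrite !mxE !sum3 !mxE /=; apply: cxE => /=; by field.
rewrite /mxtrace sum3 !mxE /=; apply: cxE => /=; by field.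
Qed.
Lemma sur_su21b A : su21 A -> psi_su21b (ph_su21b A) = A.
Proof.
move=> /su21_eqs [E [T1 T2]].
move: (E (@Ordinal 3 0 isT) (@Ordinal 3 0 isT)); rewrite ?/sg3 /= => -[e00 f00].
move: (E (@Ordinal 3 0 isT) (@Ordinal 3 1 isT)); rewrite ?/sg3 /= => -[e01 f01].
move: (E (@Ordinal 3 0 isT) (@Ordinal 3 2 isT)); rewrite ?/sg3 /= => -[e02 f02].
move: (E (@Ordinal 3 1 isT) (@Ordinal 3 0 isT)); rewrite ?/sg3 /= => -[e10 f10].
move: (E (@Ordinal 3 1 isT) (@Ordinal 3 1 isT)); rewrite ?/sg3 /= => -[e11 f11].
move: (E (@Ordinal 3 1 isT) (@Ordinal 3 2 isT)); rewrite ?/sg3 /= => -[e12 f12].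
move: (E (@Ordinal 3 2 isT) (@Ordinal 3 0 isT)); rewrite ?/sg3 /= => -[e20 f20].
move: (E (@Ordinal 3 2 isT) (@Ordinal 3 1 isT)); rewrite ?/sg3 /= => -[e21 f21].
move: (E (@Ordinal 3 2 isT) (@Ordinal 3 2 isT)); rewrite ?/sg3 /= => -[e22 f22].
apply/matrixP => i j; elim/ord3P: i; elim/ord3P: j; rewrite !mxE /=; apply: cxE => /=; rewrite ?mxE /=; lra.
Qed.
Lemma br_su21b x y : psi_su21b (sc_bracket C_su21b x y) = psi_su21b x *m psi_su21b y - psi_su21b y *m psi_su21b x.
Proof.
rewrite sc_su21b; apply/matrixP => i j; elim/ord3P: i; elim/ord3P: j; rewrite !mxE !sum3 !mxE /=; apply: cxE => /=; rewrite ?mxE /=.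
all: by field.
Qed.
Lemma pres_su21b : presents (fun a : R => (a%:C)%C) (@su21 R) (sc_bracket C_su21b).
Proof. exact: (presents_of (@lin_su21b) (@phpsi_su21b) (@in_su21b) (@sur_su21b) (@br_su21b)). Qed.
Lemma ctr_su21b : contraction_of (@sc_bracket R 8 C_su21b) (@L77_L1 R).
Proof.
apply: contraction_N => i j k; elim/ord8P: i; elim/ord8P: j; elim/ord8P: k;
  rewrite /okN /miN /fcN /=.
all: rewrite ?oppr0; try by [].
Qed.
End S_su21b.


Theorem proposition7 (R : realType) :
  (is_contraction_of_su3 (@L72_L1 R) /\ is_contraction_of_su21 (@L72_L1 R)) /\
  (is_contraction_of_su21 (@L77_L1 R) /\ is_contraction_of_sl3R (@L77_L1 R)).
Proof.
split; split.
- by exists (sc_bracket (@C_su3 R)); split; [exact: pres_su3 | exact: ctr_su3].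
- by exists (sc_bracket (@C_su21a R)); split; [exact: pres_su21a | exact: ctr_su21a].
- by exists (sc_bracket (@C_su21b R)); split; [exact: pres_su21b | exact: ctr_su21b].
- by exists (sc_bracket (@C_sl3 R)); split; [exact: pres_sl3 | exact: ctr_sl3].
Qed.
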